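(* Let $G$ be a finite simple graph with $n>2$ vertices. Then $\mathrm{mur}(G)=1$ if and only if $G$ or $\overline{G}$ is isomorphic to either $K_r\cup K_s$ for positive integers $r,s$ with $r+s=n$ (so $r+s>2$), or $K_r\cup\overline{K_s}$ for integers $r,s$ with $r+s=n$ and $1<r<n$.
   Context: For a finite simple undirected graph $G$ on vertices $v_1,\dots,v_n$, let $A_G$ be its $(0,1)$-adjacency matrix, $D_G=\mathrm{diag}(d_1,\dots,d_n)$ with $d_i$ the degree of $v_i$, $I$ the $n\times n$ identity matrix and $J$ the $n\times n$ all-ones matrix. A universal adjacency matrix of $G$ is any matrix $\alpha A_G+\beta I+\gamma J+\delta D_G$ with real scalars $\alpha,\beta,\gamma,\delta$ and $\alpha\neq 0$. The minimum universal rank $\mathrm{mur}(G)$ is the minimum rank over all universal adjacency matrices of $G$. $\overline{G}$ denotes the complement of $G$; $K_r\cup K_s$ and $K_r\cup\overline{K_s}$ denote vertex-disjoint unions, where $\overline{K_s}$ is the edgeless graph on $s$ vertices. *)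

(* Defs.v *)
From HB Require Import structures.
From mathcomp Require Import all_boot all_order all_algebra.
From mathcomp Require Import reals.
Set Implicit Arguments. Unset Strict Implicit. Unset Printing Implicit Defensive.
Import Order.TTheory GRing.Theory Num.Theory.
Local Open Scope ring_scope.

Definition simple_graph (n : nat) (e : rel 'I_n) : Prop :=
  symmetric e /\ irreflexive e.

Definition adjmx (R : realType) (n : nat) (e : rel 'I_n) : 'M[R]_n :=
  \matrix_(i, j) (e i j)%:R.

Definition degmx (R : realType) (n : nat) (e : rel 'I_n) : 'M[R]_n :=
  \matrix_(i, j) ((i == j)%:R * (#|[set k | e i k]|)%:R).

Definition onesmx (R : realType) (n : nat) : 'M[R]_n := const_mx 1.

Definition univ_adj (R : realType) (n : nat) (e : rel 'I_n)
  (alpha beta gamma delta : R) : 'M[R]_n :=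
  alpha *: adjmx R e + beta *: 1%:M + gamma *: onesmx R n + delta *: degmx R e.

Definition is_mur (R : realType) (n : nat) (e : rel 'I_n) (k : nat) : Prop :=
  (exists alpha beta gamma delta : R,
      alpha != 0 /\ \rank (univ_adj e alpha beta gamma delta) = k) /\
  (forall alpha beta gamma delta : R,
      alpha != 0 -> (k <= \rank (univ_adj e alpha beta gamma delta))%N).

Definition compl_graph (n : nat) (e : rel 'I_n) : rel 'I_n :=
  fun i j => (i != j) && ~~ e i j.

Definition graph_iso (n : nat) (e h : rel 'I_n) : Prop :=
  exists f : 'I_n -> 'I_n, bijective f /\ forall x y, e x y = h (f x) (f y).

(* K_r u K_{n-r}: vertices < r form one clique, the remaining vertices another *)
Definition KK (n r : nat) : rel 'I_n :=
  fun i j => (i != j) && ((i < r)%N == (j < r)%N).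

(* K_r u complement(K_{n-r}): vertices < r form a clique, the others are isolated *)
Definition KKbar (n r : nat) : rel 'I_n :=
  fun i j => [&& i != j, (i < r)%N & (j < r)%N].

(* Main.v *)
Require Import Defs.
From HB Require Import structures.
From mathcomp Require Import all_boot all_order all_algebra.
From mathcomp Require Import reals.
From mathcomp Require Import ring lra.
Set Implicit Arguments. Unset Strict Implicit. Unset Printing Implicit Defensive.
Import Order.TTheory GRing.Theory Num.Theory.
Local Open Scope ring_scope.

Lemma univ_adjE (R : realType) n (e : rel 'I_n) (a b c d : R) i j :
  univ_adj e a b c d i j =
  a * (e i j)%:R + b * (i == j)%:R + c + d * ((i == j)%:R * (#|[set k | e i k]|)%:R).
Proof. by rewrite /univ_adj /adjmx /degmx /onesmx !mxE mulr1. Qed.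

Lemma rank1_fact (R : fieldType) n (M : 'M[R]_n) :
  \rank M = 1%N -> (forall i j, M i j = M j i) ->
  exists (l : R) (w : 'I_n -> R), forall i j, M i j = l * w i * w j.
Proof.
move=> r1 sym.
have M0 : M != 0 by rewrite -mxrank_eq0 r1.
have : ~~ [forall i, [forall j, M i j == 0]].
  apply: contra M0 => /forallP H; apply/eqP/matrixP => i j.
  by rewrite mxE; apply/eqP; move/forallP: (H i).
rewrite negb_forall => /existsP [k]; rewrite negb_forall => /existsP [j0 Hk].
have rk : \rank (row k M) = 1%N.
  rewrite rank_rV; apply/eqP; rewrite eqb1; apply: contra Hk => /eqP H.
  by have := congr1 (fun A : 'rV[R]_n => A 0 j0) H; rewrite !mxE => ->.
have sub : (M <= row k M)%MS.
  by rewrite -(mxrank_leqif_sup (row_sub k M)).2 rk r1.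
have hc : forall i j, M i j = M i j0 / M k j0 * M k j.
  move=> i j; have /sub_rVP [c hc] := submx_trans (row_sub i M) sub.
  have h1 := congr1 (fun A : 'rV[R]_n => A 0 j) hc; have h2 := congr1 (fun A : 'rV[R]_n => A 0 j0) hc.
  rewrite !mxE in h1 h2; rewrite h1 h2; field; exact: Hk.
exists (M j0 j0 / M k j0 / M k j0), (fun i => M k i) => i j.
rewrite hc (sym i j0) (hc j0 i); field; exact: Hk.
Qed.
Section Core.
Variables (R : realType) (n : nat) (hn : (2 < n)%N) (e : rel 'I_n) (irr : irreflexive e).
Variables (p q l : R) (w : 'I_n -> R) (hpq : p != q).
Hypothesis hV : forall x y, x != y -> l * w x * w y = if e x y then p else q.
Variables (x1 y1 x2 y2 : 'I_n) (h1 : e x1 y1) (h2 : x2 != y2) (h3 : ~~ e x2 y2).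

Let val x y := l * w x * w y.

Lemma valeq x y u z : x != y -> u != z -> (e x y == e u z) = (val x y == val u z).
Proof.
move=> hxy huz; rewrite /val !hV //.
case: (e x y); case: (e u z) => /=; first [by rewrite !eqxx | by rewrite (negbTE hpq) | by rewrite [q == p]eq_sym (negbTE hpq)].
Qed.

Lemma pattern (st : rel 'I_n) c1 c2 : c1 != c2 ->
  (forall x y, x != y -> (val x y == val c1 c2) = ~~ st x y) ->
  (forall x y, e x y = (x != y) && st x y) \/ (forall x y, e x y = (x != y) && ~~ st x y).
Proof.
move=> hc H.
have E : forall x y, x != y -> (e x y == e c1 c2) = ~~ st x y.
  by move=> x y hxy; rewrite valeq // H.
case hb: (e c1 c2); [right|left] => x y; case: (eqVneq x y) => [->|hxy];
  rewrite ?irr //= ; have := E x y hxy; rewrite hb;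
  case: (e x y); case: (st x y).
all: by [].
Qed.

Lemma x1y1 : x1 != y1.
Proof. by apply: contraTneq h1 => ->; rewrite irr. Qed.

Lemma l_neq0 : l != 0.
Proof.
apply/negP => /eqP l0.
have := valeq x1y1 h2; rewrite /val l0 !mul0r eqxx h1.
by case: (e x2 y2) h3.
Qed.

Definition coreconcl := exists S : {set 'I_n}, [\/
  (exists s t, s \in S /\ t \notin S) /\ (forall x y, e x y = (x != y) && ((x \in S) == (y \in S))),
  (exists s t, s \in S /\ t \notin S) /\ (forall x y, e x y = (x != y) && ~~ ((x \in S) == (y \in S))),
  (1 < #|S| < n)%N /\ (forall x y, e x y = (x != y) && ((x \in S) && (y \in S))) |
  (1 < #|S| < n)%N /\ (forall x y, e x y = (x != y) && ~~ ((x \in S) && (y \in S)))].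

Lemma core : coreconcl.
Proof.
have hl := l_neq0.
case: (boolP [exists z, w z == 0]) => [/existsP [z /eqP wz] | ].
- pose S := [set x | w x != 0].
  have [y0 hy0] : exists y0 : 'I_n, y0 != z.
    have : (1 < #|'I_n|)%N by rewrite card_ord ltnW.
    by case/card_gt1P => a [b [_ _ hab]]; case: (eqVneq a z) => [ha|ha]; [exists b; rewrite -ha eq_sym|exists a].
  have hz : z \notin S by rewrite inE wz eqxx.
  have key : forall x y, x != y -> (val x y == val y0 z) = ~~ ((x \in S) && (y \in S)).
    move=> x y _; rewrite /val wz mulr0 !inE negb_and !negbK.
    by rewrite !mulf_eq0 (negbTE hl).
  have hlt : (#|S| < n)%N.
    have hC := cardsC S; rewrite card_ord in hC.
    have : (0 < #|~: S|)%N by apply/card_gt0P; exists z; rewrite inE.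
    move=> hk; have : (#|S| < #|S| + #|~: S|)%N by rewrite -addn1 leq_add2l.
    by rewrite hC.
  exists S; case: (pattern hy0 key) => He; [apply: Or43|apply: Or44]; split => //.
  + apply/andP; split => //; apply/card_gt1P; exists x1, y1.
    by move: h1; rewrite He => /and3P [? ? ?]; split.
  + apply/andP; split => //; apply/card_gt1P; exists x2, y2.
    by move: h3; rewrite He h2 /= negbK => /andP [? ?]; split.
- rewrite negb_exists => /forallP wnz.
  have hw : forall x, w x != 0 by move=> x; apply: wnz.
  pose a := w x1; pose S := [set x | w x == a].
  have [t ht] : exists t, w t != a.
    case: (boolP [exists t, w t != a]) => [/existsP //|]; rewrite negb_exists => /forallP H; exfalso.
    have := valeq x1y1 h2; rewrite /val.
    rewrite (eqP (negPn (H x1))) (eqP (negPn (H y1))) (eqP (negPn (H x2))) (eqP (negPn (H y2))).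
    by rewrite eqxx h1; case: (e x2 y2) h3.
  have three : forall u1 u2 u3 : R, (u1 == p) || (u1 == q) -> (u2 == p) || (u2 == q) ->
     (u3 == p) || (u3 == q) -> u1 != u2 -> u1 != u3 -> u2 = u3.
    move=> u1 u2 u3 /orP [] /eqP -> /orP [] /eqP -> /orP [] /eqP -> //; by rewrite eqxx.
  have inpq : forall x y, x != y -> (val x y == p) || (val x y == q).
    by move=> x y hxy; rewrite /val hV //; case: (e x y); rewrite eqxx ?orbT.
  have claim1 : forall x y, w x != a -> w y != a -> w x = w y.
    move=> x y hx hy; apply/eqP/negPn/negP => hxy.
    have d1 : x1 != x by apply: contraNneq hx => <-.
    have d2 : x1 != y by apply: contraNneq hy => <-.
    have d3 : x != y by apply: contraNneq hxy => ->.
    have := three _ _ _ (inpq _ _ d1) (inpq _ _ d2) (inpq _ _ d3).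
    have hla : l * a != 0 by rewrite mulf_neq0 // hw.
    have e1 : val x1 x != val x1 y.
      by rewrite /val -/a; apply: contra hxy => /eqP /(mulfI hla) ->.
    have e2 : val x1 x != val x y.
      rewrite /val -/a [l * w x * w y]mulrAC; apply: contra hy => /eqP H.
      by have := mulIf (hw x) H => /(mulfI hl) <-.
    move=> /(_ e1 e2); rewrite /val -/a => /(mulIf (hw y)) /(mulfI hl) H.
    by move: hx; rewrite H eqxx.
  have hla : l * a != 0 by rewrite mulf_neq0 // hw.
  have x1t : x1 != t by apply: contra ht => /eqP <-.
  have key : forall x y, x != y -> (val x y == val x1 t) = ~~ ((x \in S) == (y \in S)).
    move=> x y _; rewrite !inE /val -/a.
    case: (eqVneq (w x) a) => hx; case: (eqVneq (w y) a) => hy /=.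
    + rewrite hx hy; apply/negbTE; apply: contra ht => /eqP /(mulfI hla) ->; by [].
    + by rewrite hx (claim1 _ _ hy ht) eqxx.
    + by rewrite hy (claim1 _ _ hx ht) mulrAC eqxx.
    + rewrite (claim1 _ _ hx ht) (claim1 _ _ hy ht); apply/negbTE.
      by apply: contra ht => /eqP /(mulIf (hw t)) /(mulfI hl) ->.
  have ex : exists s t, s \in S /\ t \notin S by exists x1, t; rewrite !inE eqxx.
  by exists S; case: (pattern x1t key) => He; [apply: Or41|apply: Or42].
Qed.
End Core.
Lemma rank_le1 (R : fieldType) n (M : 'M[R]_n) (w : 'I_n -> R) :
  (forall i j, M i j = w i * w j) -> (\rank M <= 1)%N.
Proof.
move=> H.
have -> : M = (\col_i w i) *m (\row_j w j).
  by apply/matrixP => i j; rewrite !mxE big_ord1 !mxE H.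
exact: leq_trans (mxrankM_maxl _ _) (rank_leq_col _).
Qed.

Lemma lowerb (R : realType) n (e : rel 'I_n) (irr : irreflexive e) x1 y1 x2 y2 :
  e x1 y1 -> x2 != y2 -> ~~ e x2 y2 ->
  forall a b c d : R, a != 0 -> (1 <= \rank (univ_adj e a b c d))%N.
Proof.
move=> h1 h2 h3 a b c d ha.
have x1y1 : x1 != y1 by apply: contraTneq h1 => ->; rewrite irr.
rewrite lt0n mxrank_eq0; apply/eqP => M0.
have E1 := congr1 (fun M : 'M[R]_n => M x1 y1) M0.
have E2 := congr1 (fun M : 'M[R]_n => M x2 y2) M0.
move: E1 E2; rewrite /= !univ_adjE !mxE h1 (negbTE h3) (negbTE h2) (negbTE x1y1) /=.
move=> E1 E2; move/eqP: ha; apply; lra.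
Qed.

Definition wS n (S : {set 'I_n}) (R : realType) (u v : R) (i : 'I_n) : R := if i \in S then u else v.

Lemma shapeA (R : realType) n (e : rel 'I_n) (S : {set 'I_n}) :
  (forall x y, e x y = (x != y) && ((x \in S) == (y \in S))) ->
  exists a b c d : R, a != 0 /\ forall i j, univ_adj e a b c d i j = wS S 1 (-1) i * wS S 1 (-1) j.
Proof.
move=> he; exists 2, 2, (-1), 0; split; first by rewrite pnatr_eq0.
move=> i j; rewrite univ_adjE he /wS; case: (eqVneq i j) => [<-|hij] /=;
  [case: (i \in S) | case: (i \in S); case: (j \in S)] => /=; rewrite ?eqxx /=; lra.
Qed.

Lemma shapeA' (R : realType) n (e : rel 'I_n) (S : {set 'I_n}) :
  (forall x y, e x y = (x != y) && ~~ ((x \in S) == (y \in S))) ->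
  exists a b c d : R, a != 0 /\ forall i j, univ_adj e a b c d i j = wS S 1 (-1) i * wS S 1 (-1) j.
Proof.
move=> he; exists (-2), 0, 1, 0; split; first by rewrite oppr_eq0 pnatr_eq0.
move=> i j; rewrite univ_adjE he /wS; case: (eqVneq i j) => [<-|hij] /=;
  [case: (i \in S) | case: (i \in S); case: (j \in S)] => /=; rewrite ?eqxx /=; lra.
Qed.

Lemma shapeB (R : realType) n (e : rel 'I_n) (S : {set 'I_n}) :
  (1 < #|S|)%N ->
  (forall x y, e x y = (x != y) && ((x \in S) && (y \in S))) ->
  exists a b c d : R, a != 0 /\ forall i j, univ_adj e a b c d i j = wS S 1 0 i * wS S 1 0 j.
Proof.
move=> hS he.
have deg : forall i, #|[set k | e i k]| = if i \in S then #|S|.-1 else 0%N.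
  move=> i; case hi: (i \in S).
  - have -> : [set k | e i k] = S :\ i by apply/setP => k; rewrite !inE he hi eq_sym.
    by rewrite (cardsD1 i S) hi add1n.
  - have -> : [set k | e i k] = set0 by apply/setP => k; rewrite !inE he hi andbF.
    exact: cards0.
have r1 : (#|S|.-1)%:R != 0 :> R by rewrite pnatr_eq0 -lt0n -ltnS prednK // ltnW.
exists 1, 0, 0, ((#|S|.-1)%:R)^-1; split; first exact: oner_neq0.
move=> i j; rewrite univ_adjE he deg /wS; case: (eqVneq i j) => [<-|hij] /=.
- by case: (i \in S); rewrite /= ?eqxx ?(mul1r, mulr1, mul0r, mulr0, add0r, addr0, mulVf r1).
- by case: (i \in S); case: (j \in S); rewrite /= ?(mul1r, mulr1, mul0r, mulr0, add0r, addr0, mulVf r1).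
Qed.

Lemma shapeB' (R : realType) n (e : rel 'I_n) (S : {set 'I_n}) :
  (1 < #|S| < n)%N ->
  (forall x y, e x y = (x != y) && ~~ ((x \in S) && (y \in S))) ->
  exists a b c d : R, a != 0 /\ forall i j, univ_adj e a b c d i j = wS S 1 0 i * wS S 1 0 j.
Proof.
move=> /andP [hS hSn] he.
have deg : forall i, #|[set k | e i k]| = if i \in S then (n - #|S|)%N else n.-1.
  move=> i; case hi: (i \in S).
  - have -> : [set k | e i k] = ~: S.
      apply/setP => k; rewrite !inE he hi /=; case hk: (k \in S) => /=; first by rewrite andbF.
      by rewrite andbT; apply: contraTneq hi => ->; rewrite hk.
    have hC := cardsC S; rewrite card_ord in hC.
    by apply/eqP; rewrite -(eqn_add2l #|S|) hC subnKC // ltnW.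
  - have -> : [set k | e i k] = [set~ i].
      by apply/setP => k; rewrite !inE he hi /= andbT eq_sym.
    by rewrite cardsC1 card_ord.
have r1 : (#|S|%:R - 1) != 0 :> R.
  by rewrite subr_eq0 (eqr_nat R #|S| 1) (gtn_eqF hS).
have n1 : (0 < n)%N by apply: leq_trans hSn.
exists (-1), ((n - #|S|)%:R / (#|S|.-1)%:R), 1, (- ((#|S|.-1)%:R)^-1); split.
  by rewrite oppr_eq0 oner_neq0.
move=> i j; rewrite univ_adjE he deg /wS.
case: (eqVneq i j) => [<-|hij] /=.
- case: (i \in S); rewrite /= ?eqxx -subn1 -?[n.-1]subn1 !natrB ?(ltnW hSn) ?(ltnW hS) //; field; exact: r1.
- case: (i \in S); case: (j \in S); rewrite /= -subn1 !natrB ?(ltnW hSn) ?(ltnW hS) //; field; exact: r1.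
Qed.

Lemma card_lt n r : (r <= n)%N -> #|[set i : 'I_n | (i < r)%N]| = r.
Proof.
move=> h.
have -> : [set i : 'I_n | (i < r)%N] = [set widen_ord h i | i : 'I_r].
  apply/setP => i; rewrite inE; apply/idP/imsetP => [hi|[j _ ->]] /=; last exact: ltn_ord.
  by exists (Ordinal hi) => //; apply: val_inj.
rewrite card_imset ?card_ord //.
by move=> a b /(congr1 val) /= /val_inj.
Qed.

Lemma mkperm n (S : {set 'I_n}) :
  exists f : 'I_n -> 'I_n, bijective f /\ forall x, (f x < #|S|)%N = (x \in S).
Proof.
pose s := enum S ++ enum (~: S).
have hs : forall x, (index x s < n)%N.
  move=> x; have hC := cardsC S; rewrite card_ord in hC; rewrite -[X in (_ < X)%N]hC.
  rewrite !cardE -size_cat index_mem mem_cat !mem_enum inE.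
  by case: (x \in S).
exists (fun x => Ordinal (hs x)); split.
  apply: injF_bij => x y /(congr1 val) /= H.
  have mx : forall z, z \in s by move=> z; rewrite mem_cat !mem_enum inE; case: (z \in S).
  by rewrite -(nth_index x (mx x)) H nth_index.
move=> x /=; rewrite /s index_cat mem_enum cardE.
case hx: (x \in S); first by rewrite index_mem mem_enum.
by rewrite ltnNge leq_addr.
Qed.

Lemma KK_f n r (f : 'I_n -> 'I_n) (S : {set 'I_n}) : injective f ->
  (forall x, (f x < r)%N = (x \in S)) ->
  forall x y, KK r (f x) (f y) = (x != y) && ((x \in S) == (y \in S)).
Proof. by move=> fi H x y; rewrite /KK (inj_eq fi) !H. Qed.

Lemma KKbar_f n r (f : 'I_n -> 'I_n) (S : {set 'I_n}) : injective f ->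
  (forall x, (f x < r)%N = (x \in S)) ->
  forall x y, KKbar r (f x) (f y) = (x != y) && ((x \in S) && (y \in S)).
Proof. by move=> fi H x y; rewrite /KKbar (inj_eq fi) !H. Qed.
Lemma suff_mur (R : realType) n (e : rel 'I_n) (irr : irreflexive e) x1 y1 x2 y2
  (w : 'I_n -> R) : e x1 y1 -> x2 != y2 -> ~~ e x2 y2 ->
  (exists a b c d : R, a != 0 /\ forall i j, univ_adj e a b c d i j = w i * w j) ->
  is_mur R e 1.
Proof.
move=> h1 h2 h3 [a [b [c [d [ha H]]]]]; split; last exact: lowerb h1 h2 h3.
exists a, b, c, d; split => //; apply/eqP; rewrite eqn_leq (rank_le1 H).
exact: lowerb h1 h2 h3 _ _ _ _ ha.
Qed.

Lemma samepair n (S : {set 'I_n}) : (2 < n)%N -> exists x y : 'I_n, x != y /\ (x \in S) == (y \in S).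
Proof.
move=> hn.
pose x0 : 'I_n := Ordinal (ltn_trans (isT : 0 < 2)%N hn).
pose x1 : 'I_n := Ordinal (ltn_trans (isT : 1 < 2)%N hn).
pose x2 : 'I_n := Ordinal hn.
have d01 : x0 != x1 by []. have d02 : x0 != x2 by []. have d12 : x1 != x2 by [].
case h0: (x0 \in S); case h1: (x1 \in S); case h2: (x2 \in S);
  first [by exists x0, x1; rewrite h0 h1 | by exists x0, x2; rewrite h0 h2 | by exists x1, x2; rewrite h1 h2].
Qed.

Lemma card_lt_notin n (S : {set 'I_n}) t : t \notin S -> (#|S| < n)%N.
Proof.
move=> ht; have hC := cardsC S; rewrite card_ord in hC.
have : (0 < #|~: S|)%N by apply/card_gt0P; exists t; rewrite inE.
move=> hk; have : (#|S| < #|S| + #|~: S|)%N by rewrite -addn1 leq_add2l.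
by rewrite hC.
Qed.

Lemma notin_of_lt n (S : {set 'I_n}) : (#|S| < n)%N -> exists t, t \notin S.
Proof.
move=> h; case: (boolP [exists t, t \notin S]) => [/existsP //|].
rewrite negb_exists => /forallP H.
have : S = setT by apply/setP => x; rewrite inE; have := H x; rewrite negbK.
by move=> hS; move: h; rewrite hS cardsT card_ord ltnn.
Qed.

Lemma conc_mur (R : realType) n (hn : (2 < n)%N) (e : rel 'I_n) (irr : irreflexive e) :
  coreconcl e -> is_mur R e 1.
Proof.
case=> S [] [hc He].
- case: hc => s [t [hs ht]]; have [x [y [hxy hxyS]]] := samepair S hn.
  have st : s != t by apply: contraNneq ht => <-.
  apply: (@suff_mur R n e irr x y s t); rewrite ?He ?hxy ?hxyS ?st ?hs ?(negbTE ht) //.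
  exact: shapeA.
- case: hc => s [t [hs ht]]; have [x [y [hxy hxyS]]] := samepair S hn.
  have st : s != t by apply: contraNneq ht => <-.
  apply: (@suff_mur R n e irr s t x y); rewrite ?He ?hxy ?hxyS ?st ?hs ?(negbTE ht) //.
  exact: shapeA'.
- case/andP: hc => h1 h2; have [t ht] := notin_of_lt h2.
  case/card_gt1P: (h1) => x [y [hx hy hxy]].
  have st : x != t by apply: contraNneq ht => <-.
  apply: (@suff_mur R n e irr x y x t); rewrite ?He ?hxy ?st ?hx ?hy ?(negbTE ht) ?andbF //.
  exact: shapeB h1 He.
- case/andP: hc => h1 h2; have [t ht] := notin_of_lt h2.
  case/card_gt1P: (h1) => x [y [hx hy hxy]].
  have st : x != t by apply: contraNneq ht => <-.
  apply: (@suff_mur R n e irr x t x y); rewrite ?He ?hxy ?st ?hx ?hy ?(negbTE ht) ?andbF //.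
  by apply: shapeB' He; rewrite h1 h2.
Qed.

Lemma mur_conc (R : realType) n (hn : (2 < n)%N) (e : rel 'I_n) (he : simple_graph e) :
  is_mur R e 1 -> coreconcl e.
Proof.
case: he => sym irr [[a [b [c [d [ha hr]]]]] hlow].
have [x1 [y1 h1]] : exists x y, e x y.
  case: (boolP [exists x, [exists y, e x y]]) => [/existsP [x /existsP [y h]]|]; first by exists x, y.
  rewrite negb_exists => /forallP H; exfalso.
  have := hlow 1 0 0 0 (oner_neq0 _).
  suff -> : univ_adj e (1 : R) 0 0 0 = 0 by rewrite mxrank0.
  apply/matrixP => i j; rewrite univ_adjE !mxE.
  have := H i; rewrite negb_exists => /forallP /(_ j) /negbTE ->.
  by rewrite !mul0r !mulr0 !addr0.
have [x2 [y2 [h2 h3]]] : exists x y, x != y /\ ~~ e x y.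
  case: (boolP [exists x, [exists y, (x != y) && ~~ e x y]]) =>
    [/existsP [x /existsP [y /andP [? ?]]]|]; first by exists x, y.
  rewrite negb_exists => /forallP H; exfalso.
  have := hlow 1 1 (-1) 0 (oner_neq0 _).
  suff -> : univ_adj e (1 : R) 1 (-1) 0 = 0 by rewrite mxrank0.
  apply/matrixP => i j; rewrite univ_adjE !mxE.
  case: (eqVneq i j) => [<-|hij]; first by rewrite irr /=; lra.
  have := H i; rewrite negb_exists => /forallP /(_ j); rewrite hij /= negbK => ->.
  by rewrite /=; lra.
have [l [w hw]] : exists (l : R) (w : 'I_n -> R), forall i j,
    univ_adj e a b c d i j = l * w i * w j.
  apply: rank1_fact => // i j; rewrite !univ_adjE (sym i j).
  by case: (eqVneq i j) => [->|hij] //; rewrite /= !mul0r.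
apply: (@core R n hn e irr (a + c) c l w _ _ x1 y1 x2 y2) => //.
  by rewrite -subr_eq0 addrK.
move=> x y hxy; rewrite -hw univ_adjE (negbTE hxy) /=.
by case: (e x y); rewrite /=; lra.
Qed.

Lemma conc_iff n (hn : (2 < n)%N) (e : rel 'I_n) (irr : irreflexive e) :
  coreconcl e <->
  exists2 g : rel 'I_n, g = e \/ g = compl_graph e &
    (exists r s : nat, [/\ (0 < r)%N, (0 < s)%N, (r + s)%N = n &
        graph_iso g (@KK n r)]) \/
    (exists r s : nat, [/\ (1 < r)%N, (r < n)%N, (r + s)%N = n &
        graph_iso g (@KKbar n r)]).
Proof.
have co : forall (h : rel 'I_n), (forall x y, e x y = (x != y) && ~~ h x y) ->
    forall x y, compl_graph e x y = (x != y) && h x y.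
  move=> h He x y; rewrite /compl_graph He.
  by case: (eqVneq x y) => [->|] //=; rewrite negbK.
split.
- case=> S; have [f [fb fS]] := mkperm S; have fi := bij_inj fb.
  case=> [] [hc He].
  + case: hc => s [t [hs ht]]; exists e; first by left.
    left; exists #|S|, (n - #|S|)%N; split.
    * by apply/card_gt0P; exists s.
    * by rewrite subn_gt0; apply: card_lt_notin ht.
    * by rewrite subnKC // ltnW // (card_lt_notin ht).
    * by exists f; split => // x y; rewrite He (KK_f fi fS).
  + case: hc => s [t [hs ht]]; exists (compl_graph e); first by right.
    left; exists #|S|, (n - #|S|)%N; split.
    * by apply/card_gt0P; exists s.
    * by rewrite subn_gt0; apply: card_lt_notin ht.
    * by rewrite subnKC // ltnW // (card_lt_notin ht).
    * exists f; split => // x y; rewrite (KK_f fi fS).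
      exact: (co _ He).
  + case/andP: hc => h1 h2; exists e; first by left.
    right; exists #|S|, (n - #|S|)%N; split => //.
    * by rewrite subnKC // ltnW.
    * by exists f; split => // x y; rewrite He (KKbar_f fi fS).
  + case/andP: hc => h1 h2; exists (compl_graph e); first by right.
    right; exists #|S|, (n - #|S|)%N; split => //.
    * by rewrite subnKC // ltnW.
    * exists f; split => // x y; rewrite (KKbar_f fi fS).
      exact: (co _ He).
- case=> g hg [] [r [s [hr hs hrs [f [fb hf]]]]];
  pose S := [set x | (f x < r)%N]; have fS : forall x, (f x < r)%N = (x \in S) by move=> x; rewrite inE.
  + have fi := bij_inj fb; have [f' ff' f'f] := fb.
    have hrn : (r < n)%N by rewrite -hrs -addn1 leq_add2l.
    have hs0 : f' (Ordinal (ltn_trans hr hrn)) \in S by rewrite -fS f'f.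
    have ht0 : f' (Ordinal hrn) \notin S by rewrite -fS f'f /= ltnn.
    have ex : exists s t, s \in S /\ t \notin S by exists (f' (Ordinal (ltn_trans hr hrn))), (f' (Ordinal hrn)).
    exists S; case: hg => hg; subst g.
    * by apply: Or41; split => // x y; rewrite hf (KK_f fi fS).
    * apply: Or42; split => // x y.
      have := hf x y; rewrite (KK_f fi fS) /compl_graph.
      case: (eqVneq x y) => [->|hxy] /=; first by rewrite irr.
      by move=> <-; rewrite negbK.
  + have fi := bij_inj fb.
    have cS : #|S| = r.
      have -> : S = f @^-1: [set i : 'I_n | (i < r)%N] by apply/setP => x; rewrite !inE.
      by rewrite card_preimset // card_lt // ltnW.
    exists S; case: hg => hg; subst g.
    * by apply: Or43; split; [rewrite cS hr hs | move=> x y; rewrite hf (KKbar_f fi fS)].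
    * apply: Or44; split; first by rewrite cS hr hs.
      move=> x y; have := hf x y; rewrite (KKbar_f fi fS) /compl_graph.
      case: (eqVneq x y) => [->|hxy] /=; first by rewrite irr.
      by move=> <-; rewrite negbK.
Qed.

Theorem theorem26 (R : realType) (n : nat) (hn : (2 < n)%N) (e : rel 'I_n)
  (he : simple_graph e) :
  is_mur R e 1 <->
  exists2 g : rel 'I_n, g = e \/ g = compl_graph e &
    (exists r s : nat, [/\ (0 < r)%N, (0 < s)%N, (r + s)%N = n &
        graph_iso g (@KK n r)]) \/
    (exists r s : nat, [/\ (1 < r)%N, (r < n)%N, (r + s)%N = n &
        graph_iso g (@KKbar n r)]).
Proof.
rewrite -conc_iff //; last by case: he.
split; first exact: mur_conc.
by apply: conc_mur => //; case: he.
Qed.
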